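(* Let $H$ be a digraph (possibly with loops), let $D$ be an $H$-colored $3$-quasi-transitive digraph, let $k \geq 5$, and let $(u,v)$ be an arc of $C_{H}^{k-1}(D)$. If $(u,v)$ is an asymmetric arc of $C_{H}^{k-1}(D)$ (i.e., $(v,u)\notin A(C_{H}^{k-1}(D))$), then $d_{D}(u,v) \leq 2$.
   Context: All digraphs are finite. A digraph $D$ is $3$-quasi-transitive if for all distinct $u,v\in V(D)$, whenever there is a directed $uv$-path of length $3$, $u$ and $v$ are joined by an arc (in some direction). $d_D(u,v)$ is the length of a shortest directed $uv$-path in $D$. $D$ has no loops and comes with a map $\rho: A(D)\to V(H)$. For a walk $W=(x_0,\ldots,x_n)$ in $D$, there is an obstruction on $x_i$ if $(\rho(x_{i-1},x_i),\rho(x_i,x_{i+1})) \notin A(H)$; for an open walk this is considered at internal vertices $x_i$, $1\le i\le n-1$, for a closed walk at all $i\in\{0,\ldots,n-1\}$ with indices modulo $n$. $O_H(W)$ is the set of indices with an obstruction; the $H$-length is $l_H(W)=|O_H(W)|+1$ for open $W$ and $|O_H(W)|$ for closed $W$. The $(k-1,H)$-closure $C_H^{k-1}(D)$ is the digraph on $V(D)$ in which $(x,y)$ is an arc iff there is a directed $xy$-path in $D$ of $H$-length at most $k-1$. *)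

(* Defs.v *)
From mathcomp Require Import all_boot.
Set Implicit Arguments. Unset Strict Implicit. Unset Printing Implicit Defensive.

(* An H-coloring of D is a map rho : V -> V -> W (only its values on arcs matter),
   where H : rel W is a digraph possibly with loops. *)

Section Defs.
Variables (V W : finType) (D : rel V) (H : rel W) (rho : V -> V -> W).

(* directed path (x_0 = x, x_1, ..., x_n = y) encoded as x :: p, with distinct vertices;
   its length is size p *)
Definition is_dpath (x : V) (p : seq V) (y : V) : Prop :=
  [/\ path D x p, uniq (x :: p) & last x p = y].

Definition three_quasi_transitive : Prop :=
  forall (u v : V) (p : seq V), u != v -> is_dpath u p v -> size p = 3 -> D u v || D v u.

Fixpoint nobs (x y : V) (s : seq V) : nat :=
  match s with
  | [::] => 0
  | z :: s' => (~~ H (rho x y) (rho y z)) + nobs y z s'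
  end.

(* H-length of the open walk x :: p : |O_H(W)| + 1 *)
Definition H_length (x : V) (p : seq V) : nat :=
  match p with
  | [::] => 1
  | y :: s => (nobs x y s).+1
  end.

Definition closure_arc (k : nat) (x y : V) : Prop :=
  x != y /\ exists p, is_dpath x p y /\ H_length x p <= k.-1.

Definition dist_le (x y : V) (n : nat) : Prop :=
  exists p, is_dpath x p y /\ size p <= n.

End Defs.

(* Main.v *)
From Stdlib Require Import Classical.
Require Import Defs.
From mathcomp Require Import all_boot zify.
Set Implicit Arguments. Unset Strict Implicit. Unset Printing Implicit Defensive.

Section Aux.
Variables (V : finType) (D : rel V).

Definition geo x p y := [/\ path D x p, last x p = y &
  forall q, path D x q -> last x q = y -> size p <= size q].

Lemma geo_split x p1 p2 y : geo x (p1 ++ p2) y ->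
  geo x p1 (last x p1) /\ geo (last x p1) p2 y.
Proof.
case=> P L M; move: P L; rewrite cat_path last_cat => /andP[P1 P2] L.
split; split=> // q Pq Lq.
- have := M (q ++ p2); rewrite cat_path last_cat Pq Lq P2 L size_cat.
  move=> h; have := h isT erefl; rewrite ?size_cat; lia.
- have := M (p1 ++ q); rewrite cat_path last_cat P1 Pq Lq size_cat.
  move=> h; have := h isT erefl; rewrite ?size_cat; lia.
Qed.

Lemma geo_uniq x p y : geo x p y -> uniq (x :: p).
Proof.
case=> P L M; rewrite /= ; apply/andP; split.
  apply/negP=> xp; case/splitPr: xp P L M => p1 p2.
  rewrite cat_path /= last_cat /= => /and3P[_ _ P2] L M.
  have := M p2 P2 L; rewrite size_cat /=; lia.
move: L; case: (shortenP P) => p' P' U' S' L'.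
have Hs := M p' P' L'.
move: U' => /andP[_ U'].
by apply: (leq_size_uniq U' S').
Qed.

Lemma geo_exists x p y : path D x p -> last x p = y -> exists q, geo x q y.
Proof.
move: {2}(size p) (leqnn (size p)) => n; elim: n p => [|n IH] p.
  move=> Hs P L; exists p; split=> // q _ _; move: Hs; rewrite leqn0 => /eqP->.
  done.
move=> Hs P L.
case: (classic (exists q, [/\ path D x q, last x q = y & size q < size p])).
  case=> q [Pq Lq Sq]; apply: (IH q) => //; lia.
move=> N; exists p; split=> // q Pq Lq; rewrite leqNgt; apply/negP=> S.
by apply: N; exists q.
Qed.

Hypothesis irr : irreflexive D.
Hypothesis qt : three_quasi_transitive D.

Lemma odd_geo n : forall a p b, size p <= n -> odd (size p) -> 3 <= size p ->
  geo a p b -> D b a.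
Proof.
elim: n => [|n IH] a p b; first by move=> Hs _ H3; move: Hs H3; lia.
move=> Hs Ho H3 G.
have U := geo_uniq G.
case: G => P L M.
case: p Hs Ho H3 P L M U => [|c1 [|c2 [|c3 r]]] //= Hs Ho H3 P L M U.
case: r Hs Ho H3 P L M U => [|d r] Hs Ho H3 P L M U.
  move: P L M U => /= /and4P[P1 P2 P3 _] L M U; subst b.
  have ab : a != c3.
    by move: U; rewrite /= !inE !negb_or => /andP[/and3P[_ _ ->]].
  have dp : is_dpath D a [:: c1; c2; c3] c3 by split=> //=; rewrite ?P1 ?P2 ?P3.
  case/orP: (qt ab dp erefl) => // Dab.
  by have := M [:: c3]; rewrite /= Dab => /(_ isT erefl).
(* size >= 4 ; odd so >= 5 *)
case: r Hs Ho H3 P L M U => [|e r] Hs Ho H3 P L M U; first by [].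
have G : geo a [:: c1, c2, c3, d, e & r] b by split.
have [G1 G2] := geo_split (p1 := [:: c1; c2]) (p2 := [:: c3, d, e & r]) G.
have [G3 _] := geo_split (p1 := [:: c1; c2; c3]) (p2 := [:: d, e & r]) G.
have Dbc2 : D b c2.
  apply: (IH _ _ _ _ _ _ G2) => /=; move: Hs Ho => /= Hs Ho; try lia.
have Dc3a : D c3 a.
  apply: (IH _ _ _ _ _ _ G3) => /=; move: Hs => /= Hs; lia.
have bin : b \in [:: d, e & r] by rewrite -L /=; exact: (mem_last d (e :: r)).
move/and5P: U => [Na _ Nc2 Nc3 _].
move: P => /= /and4P[_ _ D23 _].
have c23 : c2 != c3 by apply/eqP=> E; move: D23; rewrite E irr.
have ac2 : a != c2 by apply: contraNneq Na => ->; rewrite !inE eqxx !orbT.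
have ac3 : a != c3 by apply: contraNneq Na => ->; rewrite !inE eqxx !orbT.
have bc2 : b != c2 by apply: contraNneq Nc2 => <-; rewrite inE bin orbT.
have bc3 : b != c3 by apply: contraNneq Nc3 => <-; rewrite bin.
have ba : b != a by apply: contraNneq Na => <-; rewrite (in_cons c1) (in_cons c2) (in_cons c3) bin !orbT.
have dp : is_dpath D b [:: c2; c3; a] a.
  split=> //=; first by rewrite Dbc2 D23 Dc3a.
  by rewrite !inE !negb_or bc2 bc3 ba c23 eq_sym ac2 eq_sym ac3.
case/orP: (qt ba dp erefl) => // Dab.
by have := M [:: b]; rewrite /= Dab => /(_ isT erefl).
Qed.

Lemma walk_dpath x q y : path D x q -> last x q = y ->
  exists q', is_dpath D x q' y /\ size q' <= size q.
Proof.
move=> P; case: (shortenP P) => p' P' U' S' L'.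
exists p'; split; first by split.
by apply: uniq_leq_size => //; case/andP: U'.
Qed.

End Aux.

Lemma nobs_le (V W : finType) (H : rel W) (rho : V -> V -> W) x y s :
  nobs H rho x y s <= size s.
Proof. elim: s x y => //= z s IH x y; have := IH y z; case: (H _ _) => /=; lia. Qed.

Theorem corollary18 (V W : finType) (D : rel V) (H : rel W) (rho : V -> V -> W)
    (k : nat) (u v : V) :
  irreflexive D ->
  three_quasi_transitive D ->
  5 <= k ->
  closure_arc D H rho k u v ->
  ~ closure_arc D H rho k v u ->
  dist_le D u v 2.
Proof.
move=> irr qt k5 [uv [p [[P U L] Hl]]] Nvu.
have [q G] := geo_exists P L.
have [Pq Lq Mq] := G.
case: (leqP (size q) 2) => [s2|s3].
  have [q' [dq sq]] := walk_dpath Pq Lq.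
  by exists q'; split=> //; apply: leq_trans s2.
exfalso; apply: Nvu; split; first by rewrite eq_sym.
suff [r [Pr Lr Sr]] : exists r, [/\ path D v r, last v r = u & size r <= 4].
  have [q' [[dq1 dq2 dq3] sq]] := walk_dpath Pr Lr.
  exists q'; split; first by split.
  case: q' dq1 dq2 dq3 sq => [|y s] /= _ _ dq3 sq.
    by move: uv; rewrite dq3 eqxx.
  have := nobs_le H rho v y s; move: sq Sr k5; lia.
case Ho: (odd (size q)).
  by exists [:: u]; rewrite /= (odd_geo irr qt (leqnn _) Ho s3 G).
have [E4|N4] := eqVneq (size q) 4.
  case: q G Pq Lq Mq E4 {s3 Ho} => [|c1 [|c2 [|c3 [|c4 [|]]]]] //= G Pq Lq Mq _.
  have [G1 _] := geo_split (p1 := [:: c1; c2; c3]) (p2 := [:: c4]) G.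
  have [_ G2] := geo_split (p1 := [:: c1]) (p2 := [:: c2; c3; c4]) G.
  have Dc3u : D c3 u by apply: (odd_geo irr qt (leqnn _) _ _ G1).
  have Dvc1 : D v c1 by apply: (odd_geo irr qt (leqnn _) _ _ G2).
  move/and4P: Pq => [_ D12 D23 _].
  by exists [:: c1; c2; c3; u]; rewrite /= Dvc1 D12 D23 Dc3u.
have s6 : 6 <= size q.
  move: s3 Ho N4; case: (size q) => [|[|[|[|[|[|m]]]]]] //=.
move: G; rewrite -(cat_take_drop (size q - 3) q) => G.
have [G1 G2] := geo_split G.
have sd : size (drop (size q - 3) q) = 3 by rewrite size_drop; lia.
have st : size (take (size q - 3) q) = size q - 3 by rewrite size_take; case: ltnP; lia.
set w := last u (take (size q - 3) q) in G1 G2.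
have Dvw : D v w by apply: (odd_geo irr qt (leqnn _) _ _ G2); rewrite sd.
have Dwu : D w u.
  apply: (odd_geo irr qt (leqnn _) _ _ G1); rewrite st; last lia.
  by rewrite oddB ?Ho //; lia.
by exists [:: w; u]; rewrite /= Dvw Dwu.
Qed.
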